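(* Let $(R_1,\mathfrak n_1,k)$ and $(R_2,\mathfrak n_2,k)$ be Noetherian local rings of positive depth with the same residue field $k$, and let $R=R_1\times_k R_2=\{(s,t)\in R_1\times R_2\mid \pi_1(s)=\pi_2(t)\}$ be their fiber product, where $\pi_j\colon R_j\to k$ are the canonical surjections. Let $i_1\colon\mathfrak n_1\to R$, $x\mapsto (x,0)$ and $i_2\colon \mathfrak n_2\to R$, $y\mapsto (0,y)$. Then $$\mathcal T(R)=\{i_1(I)\oplus i_2(J)\mid I\in X_1,\ J\in X_2\}\cup\{R\},$$ where, for $j=1,2$: $X_j=\{\mathfrak n_j\}$ if $R_j$ is a discrete valuation ring, and $X_j=\mathcal T(R_j)\setminus\{R_j\}$ if $R_j$ is not a discrete valuation ring.
   Context: For a ring $A$, the trace ideal of an $A$-module $M$ is $\mathrm{tr}_A(M)=\sum_{f\in\mathrm{Hom}_A(M,A)}\mathrm{Im}f$; an ideal is a trace ideal if it equals $\mathrm{tr}_A(M)$ for some $M$. $\mathcal T(A)$ denotes the set of trace ideals of $A$ containing a non-zerodivisor of $A$. Here $i_1(I)\oplus i_2(J)=\{(x,y)\mid x\in I,\ y\in J\}\subseteq R$. *)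

(* Defs.v *)
From HB Require Import structures.
From mathcomp Require Import all_boot all_order all_algebra.
Set Implicit Arguments. Unset Strict Implicit. Unset Printing Implicit Defensive.
Import Order.TTheory GRing.Theory.
Local Open Scope ring_scope.

(** Subsets of a ring are represented as Prop-valued predicates;
    two subsets are identified when extensionally equal ([eqset]). *)
Definition eqset (T : Type) (A B : T -> Prop) := forall x, A x <-> B x.

Section RingNotions.
Variable A : comNzRingType.

Definition is_unit (x : A) := exists y, x * y = 1.

Definition is_ideal (I : A -> Prop) :=
  I 0 /\ (forall x y, I x -> I y -> I (x + y)) /\ (forall a x, I x -> I (a * x)).

Definition noetherian :=
  forall I : nat -> A -> Prop, (forall n, is_ideal (I n)) ->
    (forall n x, I n x -> I n.+1 x) ->
    exists N, forall n, (N <= n)%N -> eqset (I n) (I N).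

(** Local ring: the non-units are closed under addition (1 <> 0 since A is nz). *)
Definition local_ring :=
  forall x y, ~ is_unit x -> ~ is_unit y -> ~ is_unit (x + y).

Definition nzd (x : A) := forall y, x * y = 0 -> y = 0.

Definition integral_domain := forall x y : A, x * y = 0 -> x = 0 \/ y = 0.

Definition principal_ideal_ring :=
  forall I, is_ideal I -> exists a, eqset I (fun x => exists r, x = r * a).

Definition is_DVR :=
  integral_domain /\ principal_ideal_ring /\ local_ring /\
  exists x : A, x <> 0 /\ ~ is_unit x.

Definition A_linear (M : lmodType A) (f : M -> A) :=
  forall (a : A) (u v : M), f (a *: u + v) = a * f u + f v.

(** trace ideal tr_A(M) = sum of the images of all f in Hom_A(M, A),
    i.e. finite sums of elements f(m). *)
Definition trace (M : lmodType A) : A -> Prop := fun x =>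
  exists (n : nat) (f : 'I_n -> M -> A) (m : 'I_n -> M),
    (forall i, A_linear (f i)) /\ x = \sum_(i < n) f i (m i).

Definition is_trace_ideal (I : A -> Prop) :=
  exists M : lmodType A, eqset I (trace M).

Definition in_calT (I : A -> Prop) :=
  is_trace_ideal I /\ exists x, I x /\ nzd x.

Definition whole : A -> Prop := fun _ => True.

End RingNotions.

Section Fiber.
Variables (k : fieldType) (R1 R2 : comNzRingType).
Variables (pi1 : {rmorphism R1 -> k}) (pi2 : {rmorphism R2 -> k}).

Definition fiberP : pred (R1 * R2)%type := fun p => pi1 p.1 == pi2 p.2.

Lemma fiberP_subring : subring_closed fiberP.
Proof.
split; rewrite /fiberP /=.
- by apply/eqP; rewrite (rmorph1 pi1) (rmorph1 pi2).
- move=> [a b] [c d] /eqP e1 /eqP e2; apply/eqP.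
  by rewrite (rmorphB pi1) (rmorphB pi2) /= e1 e2.
- move=> [a b] [c d] /eqP e1 /eqP e2; apply/eqP.
  by rewrite (rmorphM pi1) (rmorphM pi2) /= e1 e2.
Qed.

HB.instance Definition _ := GRing.isSubringClosed.Build (R1 * R2)%type fiberP
  fiberP_subring.

Record fiber_product := FiberElt {
  fiber_val : (R1 * R2)%type; _ : fiber_val \in fiberP }.

HB.instance Definition _ := [isSub for fiber_val].


HB.instance Definition _ := [Choice of fiber_product by <:].
HB.instance Definition _ := GRing.SubChoice_isSubComNzRing.Build (R1 * R2)%type
  fiberP fiber_product fiberP_subring.

Definition fib1 (r : fiber_product) : R1 := (val r).1.
Definition fib2 (r : fiber_product) : R2 := (val r).2.

(** i_1(I) \oplus i_2(J) = {(x,y) | x in I, y in J} as a subset of R *)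
Definition fiber_sum (I : R1 -> Prop) (J : R2 -> Prop) : fiber_product -> Prop :=
  fun r => I (fib1 r) /\ J (fib2 r).

End Fiber.

(** The set X_j of the theorem, for R_j with maximal ideal ker pi_j. *)
Definition X_set (k : fieldType) (A : comNzRingType) (pi : {rmorphism A -> k})
    (I : A -> Prop) :=
  (is_DVR A /\ eqset I (fun x => pi x = 0)) \/
  (~ is_DVR A /\ in_calT I /\ ~ eqset I (@whole A)).

(* Main.v *)
Require Import Defs.
From HB Require Import structures.
From mathcomp Require Import all_boot all_order all_algebra.
From mathcomp Require Import ring.
From Stdlib Require Import ClassicalEpsilon Classical.
Set Warnings "-notation-overridden,-ambiguous-paths,-redundant-canonical-projection".
Import GRing.Theory.
Local Open Scope ring_scope.

Section General.
Variable A : comNzRingType.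

Definition closedI (I : A -> Prop) :=
  forall f : A -> A, (forall a u v, I u -> I v -> f (a * u + v) = a * f u + f v) ->
    forall x, I x -> I (f x).

Lemma lin0 (M : lmodType A) (f : M -> A) : A_linear f -> f 0 = 0.
Proof.
move=> hf; have := hf 1 0 0; rewrite scale1r addr0 mul1r => h.
have: f 0 + f 0 - f 0 = f 0 - f 0 by rewrite -h.
by rewrite subrr addrK.
Qed.

Lemma trace_ideal (M : lmodType A) : is_ideal (trace M).
Proof.
split; first by exists 0%N, (fun _ _ => 0), (fun _ => 0); split; [move=> i a u v; rewrite mulr0 addr0|rewrite big_ord0].
split.
  move=> x y [n [f [m [hf ->]]]] [n' [f' [m' [hf' ->]]]].
  exists (n + n')%N, (fun i => match split i with inl j => f j | inr j => f' j end),
     (fun i => match split i with inl j => m j | inr j => m' j end).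
  split; first by move=> i; case: (split i).
  by rewrite big_split_ord /=; congr (_ + _); apply: eq_bigr => i _;
   [rewrite (unsplitK (inl i : 'I_n + 'I_n'))|rewrite (unsplitK (inr i : 'I_n + 'I_n'))].
move=> a x [n [f [m [hf ->]]]].
exists n, f, (fun i => a *: m i); split => //.
rewrite mulr_sumr; apply: eq_bigr => i _.
by have := hf i a (m i) 0; rewrite addr0 (@lin0 M _ (hf i)) addr0.
Qed.

Lemma ideal_sum (I : A -> Prop) n (F : 'I_n -> A) : is_ideal I ->
  (forall i, I (F i)) -> I (\sum_(i < n) F i).
Proof.
move=> [I0 [ID _]] hF; elim/big_ind: _ => //.
Qed.

Lemma trace_closed (M : lmodType A) : closedI (trace M).
Proof.
rewrite /closedI => phi hphi x [n [f [m [hf ->]]]].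
have Tg : forall i u, trace M (f i u).
  move=> i u; exists 1%N, (fun _ => f i), (fun _ => u); split => //.
  by rewrite big_ord1.
have hadd : forall u v, trace M u -> trace M v -> phi (u + v) = phi u + phi v.
  by move=> u v hu hv; have := hphi 1 u v hu hv; rewrite !mul1r.
have hsum : forall n' (F : 'I_n' -> A), (forall i, trace M (F i)) ->
    phi (\sum_(i < n') F i) = \sum_(i < n') phi (F i).
  move=> n' F hF; elim: n' F hF => [|n' IH] F hF.
    rewrite !big_ord0. have := hphi 1 0 0.
    have [T0 _] := trace_ideal M.
    move/(_ T0 T0); rewrite !mul1r addr0 => h.
    have: phi 0 + phi 0 - phi 0 = phi 0 - phi 0 by rewrite -h.
    by rewrite subrr addrK.
  rewrite !big_ord_recr /= hadd ?IH //.
  by apply: ideal_sum; [exact: trace_ideal|move=> i; exact: hF].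
rewrite hsum; last by move=> i; exact: Tg.
exists n, (fun i u => phi (f i u)), m; split => //.
move=> i a u v; rewrite (hf i) hphi //.
Qed.

Lemma trace_ideal_props (I : A -> Prop) : is_trace_ideal I -> is_ideal I /\ closedI I.
Proof.
move=> [M hM]; have [T0 [TD TM]] := trace_ideal M; split.
  split; first by apply/hM.
  split; first by move=> x y /hM hx /hM hy; apply/hM; apply: TD.
  by move=> a x /hM hx; apply/hM; apply: TM.
move=> f hf x /hM hx; apply/hM; apply: (@trace_closed M f) => //.
by move=> a u v /hM hu /hM hv; apply: hf.
Qed.

Section Construct.
Variable I : A -> Prop.
Hypothesis Iid : is_ideal I.
Hypothesis Icl : closedI I.
Definition Pb : pred A^o := fun x => if excluded_middle_informative (I x) then true else false.
Lemma PbE x : Pb x <-> I x.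
Proof. rewrite /Pb; case: excluded_middle_informative => //; split => //. Qed.
Lemma Pb_submod : submod_closed Pb.
Proof.
case: Iid => I0 [ID IM].
split; first by apply/PbE.
move=> a u v /PbE hu /PbE hv; apply/PbE.
apply: ID => //. exact: IM.
Qed.
HB.instance Definition _ := GRing.isSubmodClosed.Build A A^o Pb Pb_submod.
Definition SI := {x : A^o | Pb x}.
HB.instance Definition _ := [isSub of SI for @sval _ _].
HB.instance Definition _ := [Choice of SI by <:].
HB.instance Definition _ := [SubChoice_isSubLmodule of SI by <:].

Lemma closed_trace_eq : eqset I (trace (SI : lmodType A)).
Proof.
move=> x; split.
  move=> hx; have px : Pb x by apply/PbE.
  exists 1%N, (fun _ (u : SI) => (val u : A)), (fun _ => (exist _ x px : SI)).
  by split; [|rewrite big_ord1].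
move=> [n [f [m [hf ->]]]]; apply: ideal_sum => // i.
pose phi (z : A) := match (insub z : option SI) with Some u => f i u | None => 0 end.
have phiE : forall u : SI, phi (val u) = f i u.
  by move=> u; rewrite /phi valK.
have phiE' : forall z (pz : Pb z), phi z = f i (exist _ z pz).
  by move=> z pz; rewrite -phiE.
rewrite -phiE; apply: Icl; last by apply/PbE; exact: valP.
move=> a u v hu hv.
have pu : Pb u by apply/PbE.
have pv : Pb v by apply/PbE.
have puv : Pb (a * u + v) by apply/PbE; case: Iid => _ [ID IM]; apply: ID => //; apply: IM.
rewrite (phiE' _ pu) (phiE' _ pv) (phiE' _ puv) -hf; congr (f i _).
by apply: val_inj.
Qed.
End Construct.

Lemma closed_trace (I : A -> Prop) : is_ideal I -> closedI I -> is_trace_ideal I.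
Proof. move=> hi hc; eexists; exact: (@closed_trace_eq I hi hc). Qed.

End General.

Section Loc.
Variables (k : fieldType) (A : comNzRingType) (pi : {rmorphism A -> k}).
Hypothesis surj : forall c : k, exists x : A, pi x = c.
Hypothesis loc : local_ring A.

Lemma unit_pi s : is_unit s -> pi s != 0.
Proof.
move=> [y hy]; apply/eqP => h.
have := congr1 pi hy; rewrite rmorphM rmorph1 h mul0r => /eqP.
by rewrite eq_sym oner_eq0.
Qed.

Lemma pi_unit s : pi s != 0 -> is_unit s.
Proof.
move=> hs; apply: NNPP => hns.
have [t ht] := surj (pi s)^-1.
have h1 : ~ is_unit (s * t).
  by move=> [w hw]; apply: hns; exists (t * w); rewrite mulrA.
have h2 : ~ is_unit (1 - s * t).
  move/unit_pi; rewrite rmorphB rmorph1 rmorphM ht mulfV // subrr.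
  by rewrite eqxx.
have := loc _ _ h1 h2; apply; exists 1; rewrite mulr1 addrC subrK //.
Qed.

Lemma nzd_neq0 (x : A) : nzd x -> x != 0.
Proof.
move=> hx; apply/eqP => h0.
have := hx 1; rewrite h0 mul0r => /(_ erefl) /eqP; by rewrite oner_eq0.
Qed.

Lemma nzdM (x y : A) : nzd x -> nzd y -> nzd (x * y).
Proof. by move=> hx hy z; rewrite -mulrA => /hx /hy. Qed.

Lemma nzdX (x : A) n : nzd x -> nzd (x ^+ n).
Proof.
move=> hx; elim: n => [|n IH]; first by move=> z; rewrite expr0 mul1r.
by rewrite exprS; apply: nzdM.
Qed.

Lemma nzdMl (x y : A) : nzd (x * y) -> nzd x.
Proof. by move=> h z hz; apply: h; rewrite mulrAC hz mul0r. Qed.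

Lemma unitM (u v : A) : is_unit u -> is_unit v -> is_unit (u * v).
Proof.
move=> [a ha] [b hb]; exists (a * b).
by rewrite mulrACA ha hb mulr1.
Qed.

Lemma unit_nzd (u : A) : is_unit u -> nzd u.
Proof. move=> [a ha] z hz; by rewrite -[z]mul1r -ha mulrAC hz mul0r. Qed.

Section DVR.
Hypothesis noeth : noetherian A.
Variable x : A.
Hypothesis xnzd : nzd x.
Hypothesis pix : pi x = 0.
Hypothesis gen : forall m, pi m = 0 -> exists c, m = x * c.

Lemma krull (y : A) : (forall n, exists c, y = x ^+ n * c) -> y = 0.
Proof.
move=> hy.
pose J n := fun z : A => exists r, z * x ^+ n = r * y.
have Jid : forall n, is_ideal (J n).
  move=> n; split; first by exists 0; rewrite !mul0r.
  split.
    by move=> a b [r hr] [s hs]; exists (r + s); rewrite mulrDl hr hs mulrDl.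
  by move=> a z [r hr]; exists (a * r); rewrite -mulrA hr mulrA.
have Jinc : forall n z, J n z -> J n.+1 z.
  by move=> n z [r hr]; exists (r * x); rewrite exprSr mulrA hr mulrAC.
have [N hN] := noeth J Jid Jinc.
have [c hc] := hy N.+1.
have : J N.+1 c by exists 1; rewrite mul1r hc mulrC.
move/(hN N.+1 (leqnSn N)) => [r hr].
have e : x ^+ N * (c * (1 - r * x)) = 0.
  have -> : x ^+ N * (c * (1 - r * x)) = c * x ^+ N - r * (x ^+ N.+1 * c).
    by rewrite exprSr; ring.
  by rewrite hr hc subrr.
have h0 : c * (1 - r * x) = 0 := nzdX x N xnzd _ e.
have u : is_unit (1 - r * x).
  by apply: pi_unit; rewrite rmorphB rmorph1 rmorphM pix mulr0 subr0 oner_eq0.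
have : (1 - r * x) * c = 0 by rewrite mulrC.
move/(unit_nzd _ u c) => c0; by rewrite hc c0 mulr0.
Qed.

Lemma decomp n (y : A) : ~ (exists c, y = x ^+ n * c) ->
  exists kk u, is_unit u /\ y = x ^+ kk * u.
Proof.
elim: n y => [|n IH] y hy.
  by exfalso; apply: hy; exists y; rewrite expr0 mul1r.
case: (classic (exists c, y = x ^+ n * c)) => [[c hc]|]; last exact: IH.
exists n, c; split; last by [].
apply: pi_unit; apply/eqP => pc.
have [d hd] := gen _ pc.
by apply: hy; exists d; rewrite hc hd exprSr mulrA.
Qed.

Lemma decomp0 (y : A) : y != 0 -> exists kk u, is_unit u /\ y = x ^+ kk * u.
Proof.
move=> hy; case: (classic (forall n, exists c, y = x ^+ n * c)).
  by move/krull => h; rewrite h eqxx in hy.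
by move/not_all_ex_not => [n hn]; exact: (decomp _ _ hn).
Qed.

Lemma isdom : integral_domain A.
Proof.
move=> y z hyz; apply: NNPP => /not_or_and [hy hz].
have [a [u [hu ey]]] := decomp0 _ (introN eqP hy).
have [b [v [hv ez]]] := decomp0 _ (introN eqP hz).
rewrite ey ez in hyz.
have : x ^+ (a + b) * (u * v) = 0 by rewrite exprD mulrACA -hyz mulrACA.
move/(nzdX x (a + b) xnzd _) => e.
have := unitM _ _ hu hv; rewrite e => [[w]]; rewrite mul0r => /eqP.
by rewrite eq_sym oner_eq0.
Qed.

Definition decP (P : Prop) : bool := if excluded_middle_informative P then true else false.
Lemma decPE P : decP P <-> P.
Proof. rewrite /decP; case: excluded_middle_informative => //; split => //. Qed.

Lemma ispir : principal_ideal_ring A.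
Proof.
move=> I [I0 [ID IM]].
case: (classic (exists y, I y /\ y <> 0)) => [[y [Iy y0]]|hn]; last first.
  exists 0 => z; split.
    move=> Iz; exists 0; rewrite mulr0; apply: NNPP => hz; apply: hn.
    by exists z.
  by move=> [r ->]; rewrite mulr0.
have Ipow : forall z, I z -> z != 0 -> exists j, I (x ^+ j) /\ exists v, is_unit v /\ z = x ^+ j * v.
  move=> z Iz z0; have [j [v [[w hw] ez]]] := decomp0 _ z0.
  exists j; split; last by exists v; split => //; exists w.
  by have := IM w z Iz; rewrite ez mulrC -mulrA hw mulr1.
have [j0 [Ij0 _]] := Ipow y Iy (introN eqP y0).
have exP : exists n, decP (I (x ^+ n)) by exists j0; apply/decPE.
case: (ex_minnP exP) => kk /decPE Ik kmin.
exists (x ^+ kk) => z; split.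
  move=> Iz; case: (eqVneq z 0) => [->|z0]; first by exists 0; rewrite mul0r.
  have [j [Ij [v [_ ez]]]] := Ipow z Iz z0.
  have lekj : (kk <= j)%N by apply: kmin; apply/decPE.
  exists (x ^+ (j - kk) * v); rewrite ez mulrAC -exprD subnK //.
by move=> [r ->]; apply: IM.
Qed.

Lemma isDVR : is_DVR A.
Proof.
split; first exact: isdom.
split; first exact: ispir.
split; first exact: loc.
exists x; split; first by apply/eqP; exact: nzd_neq0.
by move/unit_pi; rewrite pix eqxx.
Qed.
End DVR.
End Loc.

Set Implicit Arguments. Unset Strict Implicit.

Section B.
Variables (k : fieldType) (R1 R2 : comNzRingType).
Variables (pi1 : {rmorphism R1 -> k}) (pi2 : {rmorphism R2 -> k}).
Local Notation R := (fiber_product pi1 pi2).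
Lemma fib1D (r s : R) : fib1 (r + s) = fib1 r + fib1 s. Proof. by []. Qed.
Lemma fib1M (r s : R) : fib1 (r * s) = fib1 r * fib1 s. Proof. by []. Qed.
Lemma fib1_one : fib1 (1 : R) = 1. Proof. by []. Qed.
Lemma fib1_zero : fib1 (0 : R) = 0. Proof. by []. Qed.
Lemma fib2D (r s : R) : fib2 (r + s) = fib2 r + fib2 s. Proof. by []. Qed.
Lemma fib2M (r s : R) : fib2 (r * s) = fib2 r * fib2 s. Proof. by []. Qed.
Lemma fib2_one : fib2 (1 : R) = 1. Proof. by []. Qed.
Lemma fib2_zero : fib2 (0 : R) = 0. Proof. by []. Qed.
Lemma fibP1 (r : R) : pi1 (fib1 r) = pi2 (fib2 r). Proof. exact/eqP/(valP r). Qed.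
Lemma fibP2 (r : R) : pi2 (fib2 r) = pi1 (fib1 r). Proof. by rewrite fibP1. Qed.
Lemma fibE1 (r s : R) : fib1 r = fib1 s -> fib2 r = fib2 s -> r = s.
Proof.
move=> h1 h2; apply: val_inj.
rewrite [val r]surjective_pairing [val s]surjective_pairing; congr pair.
exact h1. exact h2.
Qed.
Lemma fibE2 (r s : R) : fib2 r = fib2 s -> fib1 r = fib1 s -> r = s.
Proof. by move=> h2 h1; apply: fibE1. Qed.
Definition mk (a : R1) (b : R2) : R := insubd 0 (a, b).
Definition mk1 (a : R1) (b : R2) : R := mk a b.
Definition mk2 (b : R2) (a : R1) : R := mk a b.
Lemma mk1E a b : pi1 a = pi2 b -> fib1 (mk1 a b) = a /\ fib2 (mk1 a b) = b.
Proof. move=> h; rewrite /fib1 /fib2 /mk1 /mk insubdK //; exact/eqP. Qed.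
Lemma mk2E b a : pi2 b = pi1 a -> fib2 (mk2 b a) = b /\ fib1 (mk2 b a) = a.
Proof. move=> h; rewrite /fib1 /fib2 /mk2 /mk insubdK //; apply/eqP; by rewrite h. Qed.
End B.
Arguments mk {k R1 R2 pi1 pi2}.
Arguments mk1 {k R1 R2 pi1 pi2}.
Arguments mk2 {k R1 R2 pi1 pi2}.


Definition linOn (A : comNzRingType) (I : A -> Prop) (f : A -> A) :=
  forall a u v, I u -> I v -> f (a * u + v) = a * f u + f v.

Lemma linOn0 (A : comNzRingType) (I : A -> Prop) f : I 0 -> linOn I f -> f 0 = 0.
Proof.
move=> I0 hf; have := hf 1 0 0 I0 I0; rewrite !mul1r addr0 => h.
have: f 0 + f 0 - f 0 = f 0 - f 0 by rewrite -h.
by rewrite subrr addrK.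
Qed.

Lemma linOnM (A : comNzRingType) (I : A -> Prop) f : is_ideal I -> linOn I f ->
  forall a u, I u -> f (a * u) = a * f u.
Proof.
move=> [I0 _] hf a u hu; have := hf a u 0 hu I0.
by rewrite !addr0 (linOn0 I0 hf) addr0.
Qed.

Lemma linOnD (A : comNzRingType) (I : A -> Prop) f : linOn I f ->
  forall u v, I u -> I v -> f (u + v) = f u + f v.
Proof. by move=> hf u v hu hv; have := hf 1 u v hu hv; rewrite !mul1r. Qed.

Lemma Xprops (k : fieldType) (A : comNzRingType) (pi : {rmorphism A -> k})
  (surj : forall c : k, exists x : A, pi x = c) (loc : local_ring A)
  (depth : exists x : A, pi x = 0 /\ nzd x) (I : A -> Prop) :
  X_set pi I ->
  [/\ is_ideal I, (forall s, I s -> pi s = 0), (exists a, I a /\ nzd a) &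
     (forall f, linOn I f -> (forall s, I s -> pi (f s) = 0) -> forall s, I s -> I (f s))].
Proof.
case=> [[_ hI]|[_ [[htr hnzd] hnw]]].
  split.
  - split; first by apply/hI; rewrite rmorph0.
    split; first by move=> x y /hI hx /hI hy; apply/hI; rewrite rmorphD hx hy addr0.
    by move=> a x /hI hx; apply/hI; rewrite rmorphM hx mulr0.
  - by move=> s /hI.
  - by have [x [px nx]] := depth; exists x; split => //; apply/hI.
  - by move=> f _ hf s hs; apply/hI; apply: hf.
have [hid hcl] := @trace_ideal_props _ I htr.
have hker : forall s, I s -> pi s = 0.
  move=> s hs; apply: NNPP => hps.
  have [y hy] := @pi_unit k A pi surj loc s (introN eqP hps).
  apply: hnw => z; split => // _.
  case: hid => _ [_ IM].
  by have := IM (z * y) s hs; rewrite -mulrA [y * s]mulrC hy mulr1.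
split => //.
by move=> f hf _ s hs; apply: hcl.
Qed.
Module S1.
Section Side.
Variables (k : fieldType) (R1 R2 : comNzRingType).
Variables (pi1 : {rmorphism R1 -> k}) (pi2 : {rmorphism R2 -> k}).
Local Notation R := (fiber_product pi1 pi2).
Hypothesis surj1 : forall c : k, exists x : R1, pi1 x = c.
Hypothesis surj2 : forall c : k, exists y : R2, pi2 y = c.
Hypothesis loc1 : local_ring R1.
Hypothesis loc2 : local_ring R2.
Hypothesis noeth1 : noetherian R1.
Hypothesis depth1 : exists x : R1, pi1 x = 0 /\ nzd x.
Hypothesis depth2 : exists y : R2, pi2 y = 0 /\ nzd y.

Lemma pi_unit1 (s : R1) : pi1 s != 0 -> is_unit s.
Proof. exact: (@pi_unit k R1 pi1 surj1 loc1 s). Qed.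
Lemma pi_unit2 (s : R2) : pi2 s != 0 -> is_unit s.
Proof. exact: (@pi_unit k R2 pi2 surj2 loc2 s). Qed.

Lemma mk10 (s : R1) : pi1 s = 0 -> pi1 s = pi2 0.
Proof. by move=> h; rewrite h rmorph0. Qed.

Lemma unitR1 (r : R) : pi1 (fib1 r) != 0 -> is_unit r.
Proof.
move=> h1.
have h2 : pi2 (fib2 r) != 0 by rewrite -fibP1.
have [s1 e1] := pi_unit1 h1.
have [s2 e2] := pi_unit2 h2.
have q1 : pi1 s1 = (pi1 (fib1 r))^-1.
  have := congr1 pi1 e1; rewrite rmorphM rmorph1 => e.
  by rewrite -[pi1 s1]mul1r -(mulVf h1) -mulrA e mulr1.
have q2 : pi2 s2 = (pi2 (fib2 r))^-1.
  have := congr1 pi2 e2; rewrite rmorphM rmorph1 => e.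
  by rewrite -[pi2 s2]mul1r -(mulVf h2) -mulrA e mulr1.
have hs : pi1 s1 = pi2 s2 by rewrite q1 q2 fibP1.
exists (mk1 s1 s2); apply: fibE1.
  by rewrite fib1M (mk1E hs).1 e1 fib1_one.
by rewrite fib2M (mk1E hs).2 e2 fib2_one.
Qed.

Lemma lift1 (a : R1) : exists r : R, fib1 r = a.
Proof.
have [b hb] := surj2 (pi1 a).
exists (mk1 a b); exact: (mk1E (esym hb)).1.
Qed.

Lemma nzd_fib1 (w : R) : nzd w -> nzd (fib1 w).
Proof.
move=> hw y hy.
case: (eqVneq (pi1 y) 0) => py.
  have hy0 : pi1 y = pi2 0 by rewrite py rmorph0.
  have e : w * mk1 y 0 = 0.
    apply: fibE1; first by rewrite fib1M (mk1E hy0).1 hy fib1_zero.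
    by rewrite fib2M (mk1E hy0).2 mulr0 fib2_zero.
  by have := congr1 (fun z0 : R => fib1 z0) (hw _ e); rewrite (mk1E hy0).1 fib1_zero.
exfalso.
have [z ez] := pi_unit1 py.
have w0 : fib1 w = 0.
  by rewrite -[fib1 w]mulr1 -ez mulrA hy mul0r.
have [x [px nx]] := depth1.
have hx0 : pi1 x = pi2 0 by rewrite px rmorph0.
have e : w * mk1 x 0 = 0.
  apply: fibE1; first by rewrite fib1M (mk1E hx0).1 w0 mul0r fib1_zero.
  by rewrite fib2M (mk1E hx0).2 mulr0 fib2_zero.
have := congr1 (fun z0 : R => fib1 z0) (hw _ e); rewrite (mk1E hx0).1 fib1_zero => x0.
by have := @nzd_neq0 _ x nx; rewrite x0 eqxx.
Qed.

Section LHS.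
Variable I : R -> Prop.
Hypothesis Iid : is_ideal I.
Hypothesis Icl : @closedI _ I.
Variable w : R.
Hypothesis Iw : I w.
Hypothesis nw : nzd w.
Hypothesis Iker : forall r, I r -> pi1 (fib1 r) = 0.

Definition K1 : R1 -> Prop := fun s => exists r, I r /\ fib1 r = s.

Lemma K1ker s : K1 s -> pi1 s = 0.
Proof. by move=> [r [Ir <-]]; apply: Iker. Qed.

Lemma K1id : is_ideal K1.
Proof.
case: Iid => I0 [ID IM].
split; first by exists 0; split.
split; first by move=> x y [r [Ir <-]] [s [Is <-]]; exists (r + s); split => //; apply: ID.
move=> a x [r [Ir <-]]; have [ra ea] := lift1 a.
by exists (ra * r); split; [apply: IM | rewrite fib1M ea].
Qed.

Lemma K1nzd : exists a, K1 a /\ nzd a.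
Proof. exists (fib1 w); split; [by exists w | exact: nzd_fib1]. Qed.

Lemma Ilin (a u v : R) : I u -> I v -> I (a * u + v).
Proof. by case: Iid => _ [ID IM] Iu Iv; apply: ID => //; apply: IM. Qed.

Lemma proj1I (r : R) : I r -> I (mk1 (fib1 r) 0).
Proof.
move=> Ir.
pose F := fun r : R => (mk1 (fib1 r) 0 : R).
have FE : forall r : R, I r -> fib1 (F r) = fib1 r /\ fib2 (F r) = 0.
  by move=> r' Ir'; apply: mk1E; apply: mk10; apply: Iker.
change (I (F r)).
apply: (@Icl F _ r Ir) => a u v Iu Iv.
have Iuv := Ilin a Iu Iv.
apply: fibE1.
  by rewrite (FE _ Iuv).1 !fib1D !fib1M (FE _ Iu).1 (FE _ Iv).1.
by rewrite (FE _ Iuv).2 !fib2D !fib2M (FE _ Iu).2 (FE _ Iv).2 mulr0 addr0.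
Qed.

Lemma caseA f : linOn K1 f -> (forall s, K1 s -> pi1 (f s) = 0) -> forall s, K1 s -> K1 (f s).
Proof.
move=> hf hk s [r [Ir <-]].
pose F := fun r : R => (mk1 (f (fib1 r)) 0 : R).
have FE : forall r : R, I r -> fib1 (F r) = f (fib1 r) /\ fib2 (F r) = 0.
  by move=> r' Ir'; apply: mk1E; apply: mk10; apply: hk; exists r'.
have K1I : forall r : R, I r -> K1 (fib1 r) by move=> r' Ir'; exists r'.
have IF : I (F r).
  apply: (@Icl F _ r Ir) => a u v Iu Iv.
  have Iuv := Ilin a Iu Iv.
  apply: fibE1.
    rewrite (FE _ Iuv).1 !fib1D !fib1M (FE _ Iu).1 (FE _ Iv).1 ?fib1D ?fib1M.
    by apply: hf; apply: K1I.
  by rewrite (FE _ Iuv).2 !fib2D !fib2M (FE _ Iu).2 (FE _ Iv).2 mulr0 addr0.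
by exists (F r); split => //; rewrite (FE _ Ir).1.
Qed.

Lemma caseB f : linOn K1 f -> (exists x, K1 x /\ pi1 (f x) != 0) ->
  (exists x, [/\ nzd x, pi1 x = 0 & forall m, pi1 m = 0 -> exists c, m = x * c])
  /\ eqset K1 (fun s => pi1 s = 0).
Proof.
move=> hf [x [Kx px]].
have [u' eu] := pi_unit1 px.
have Ka : K1 (fib1 w) by exists w.
have na : nzd (fib1 w) := nzd_fib1 nw.
have hM := linOnM K1id hf.
have star : forall y, K1 y -> fib1 w * f y = y * f (fib1 w).
  by move=> y Ky; rewrite -(hM _ y Ky) -(hM y _ Ka) mulrC.
have xq : x * (u' * f (fib1 w)) = fib1 w.
  by rewrite mulrCA -(star x Kx) mulrCA [u' * _]mulrC eu mulr1.
have nq : nzd (u' * f (fib1 w)).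
  by apply: (@nzdMl _ _ x); rewrite mulrC xq.
have nx : nzd x by apply: (@nzdMl _ x (u' * f (fib1 w))); rewrite xq.
have dec : forall y, K1 y -> y = x * (u' * f y).
  move=> y Ky; apply/eqP; rewrite -subr_eq0; apply/eqP; apply: nq.
  rewrite mulrBr.
  have -> : u' * f (fib1 w) * (x * (u' * f y)) = u' * (fib1 w * f y).
    by rewrite -[in RHS]xq; ring.
  by rewrite star //; ring.
have Kall : forall m, pi1 m = 0 -> K1 m.
  move=> m pm.
  have [r [Ir er]] := Kx.
  pose F := fun r : R => (mk1 (m * (u' * f (fib1 r))) 0 : R).
  have FE : forall r : R, fib1 (F r) = m * (u' * f (fib1 r)) /\ fib2 (F r) = 0.
    by move=> r'; apply: mk1E; apply: mk10; rewrite rmorphM pm mul0r.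
  have IF : I (F r).
    apply: (@Icl F _ r Ir) => a u v Iu Iv.
    apply: fibE1.
      rewrite (FE _).1 !fib1D !fib1M (FE u).1 (FE v).1 ?fib1D ?fib1M hf; first by ring.
        by exists u.
      by exists v.
    by rewrite (FE _).2 !fib2D !fib2M (FE u).2 (FE v).2 mulr0 addr0.
  exists (F r); split => //; rewrite (FE r).1 er.
  by rewrite [u' * _]mulrC eu mulr1.
split.
  exists x; split => //; first exact: K1ker.
  by move=> m pm; exists (u' * f m); apply: dec; apply: Kall.
by move=> s; split; [exact: K1ker | exact: Kall].
Qed.

Lemma K1X : X_set pi1 K1.
Proof.
case: (classic (is_DVR R1)) => hD.
  left; split => //.
  have [hdom [hpir _]] := hD.
  have [a ha] := hpir K1 K1id.
  have [w1 [Kw1 nw1]] := K1nzd.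
  have a0 : a != 0.
    apply/eqP => a0; move: (ha w1) => [/(_ Kw1) [r er] _].
    by have := @nzd_neq0 _ w1 nw1; rewrite er a0 mulr0 eqxx.
  have Ka : K1 a by apply/ha; exists 1; rewrite mul1r.
  pose f := fun y : R1 => epsilon (inhabits 0) (fun c => y = c * a).
  have fE : forall y, K1 y -> y = f y * a.
    move=> y /ha hy; exact: (epsilon_spec (inhabits 0) (fun c => y = c * a) hy).
  have canc : forall c c', c * a = c' * a -> c = c'.
    move=> c c' e; have : (c - c') * a = 0 by rewrite mulrBl e subrr.
    case/hdom => [/eqP|/eqP]; first by rewrite subr_eq0 => /eqP.
    by rewrite (negbTE a0).
  have hf : linOn K1 f.
    move=> b u v Ku Kv; apply: canc.
    have Kuv : K1 (b * u + v) by case: K1id => _ [ID IM]; apply: ID => //; apply: IM.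
    by rewrite -fE // mulrDl -mulrA -!fE.
  have fa : f a = 1 by apply: canc; rewrite -fE // mul1r.
  have pfa : pi1 (f a) != 0 by rewrite fa rmorph1 oner_eq0.
  by have [_ H] := caseB hf (ex_intro _ a (conj Ka pfa)).
right; split => //.
split.
  split; last exact: K1nzd.
  apply: closed_trace; first exact: K1id.
  move=> f hf s Ks.
  case: (classic (forall s, K1 s -> pi1 (f s) = 0)) => h.
    exact: caseA.
  exfalso; apply: hD.
  have [x hx] := not_all_ex_not _ _ h.
  have [Kx px] := imply_to_and _ _ hx.
  have [[y [ny py gen]] _] := caseB hf (ex_intro _ x (conj Kx (introN eqP px))).
  exact: (@isDVR k R1 pi1 surj1 loc1 noeth1 y ny py gen).
move=> hw; have := K1ker ((hw 1).2 Logic.I); rewrite rmorph1 => /eqP.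
by rewrite oner_eq0.
Qed.
End LHS.

Section RHS.
Variable L : R -> Prop.
Variable Q1 : R1 -> Prop.
Hypothesis L0 : L 0.
Hypothesis LQ : forall s, Q1 s -> L (mk1 s 0).
Hypothesis Qcl : forall f, linOn Q1 f -> (forall s, Q1 s -> pi1 (f s) = 0) ->
  forall s, Q1 s -> Q1 (f s).
Hypothesis Qker : forall s, Q1 s -> pi1 s = 0.
Variable F : R -> R.
Hypothesis hF : linOn L F.

Lemma side1 s : Q1 s -> fib2 (F (mk1 s 0)) = 0 /\ Q1 (fib1 (F (mk1 s 0))).
Proof.
have F0 := linOn0 L0 hF.
have e2 : forall s, Q1 s -> fib2 (F (mk1 s 0)) = 0.
  move=> s' Qs'.
  have [z [pz nz]] := depth2.
  have hz : pi1 0 = pi2 z by rewrite pz rmorph0.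
  have hs : pi1 s' = pi2 0 by rewrite Qker // rmorph0.
  have e : (mk1 0 z : R) * mk1 s' 0 = 0.
    apply: fibE1; first by rewrite fib1M (mk1E hz).1 mul0r fib1_zero.
    by rewrite fib2M (mk1E hs).2 mulr0 fib2_zero.
  have := @hF (mk1 0 z) (mk1 s' 0) 0 (LQ Qs') L0; rewrite addr0 e F0 addr0 => e'.
  have := congr1 (fun z0 : R => fib2 z0) e'; rewrite fib2_zero fib2M (mk1E hz).2 => h.
  by apply: nz; rewrite -h.
pose f := fun s => fib1 (F (mk1 s 0)).
have hf : linOn Q1 f.
  move=> a u v Qu Qv.
  have [a' ha'] := surj2 (pi1 a).
  have ha : pi1 a = pi2 a' by rewrite ha'.
  have hu : pi1 u = pi2 0 by rewrite Qker // rmorph0.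
  have hv : pi1 v = pi2 0 by rewrite Qker // rmorph0.
  have huv : pi1 (a * u + v) = pi2 0.
    by rewrite rmorphD rmorphM (Qker Qu) (Qker Qv) mulr0 addr0 rmorph0.
  have E : (mk1 (a * u + v) 0 : R) = mk1 a a' * mk1 u 0 + mk1 v 0.
    apply: fibE1.
      by rewrite (mk1E huv).1 !fib1D !fib1M (mk1E ha).1 (mk1E hu).1 (mk1E hv).1.
    by rewrite (mk1E huv).2 !fib2D !fib2M (mk1E ha).2 (mk1E hu).2 (mk1E hv).2 mulr0 addr0.
  have Lu := LQ Qu.
  have Lv := LQ Qv.
  rewrite /f E hF //.
  transitivity (fib1 (mk1 a a' : R) * fib1 (F (mk1 u 0)) + fib1 (F (mk1 v 0))); first by [].
  by rewrite (mk1E ha).1.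
move=> Qs; split; first exact: e2.
apply: (Qcl hf) => // s' Qs'.
by rewrite /f fibP1 e2 // rmorph0.
Qed.
End RHS.
End Side.
End S1.

Module S2.
Section Side.
Variables (k : fieldType) (R1 R2 : comNzRingType).
Variables (pi1 : {rmorphism R1 -> k}) (pi2 : {rmorphism R2 -> k}).
Local Notation R := (fiber_product pi1 pi2).
Hypothesis surj2 : forall c : k, exists x : R2, pi2 x = c.
Hypothesis surj1 : forall c : k, exists y : R1, pi1 y = c.
Hypothesis loc2 : local_ring R2.
Hypothesis loc1 : local_ring R1.
Hypothesis noeth2 : noetherian R2.
Hypothesis depth2 : exists x : R2, pi2 x = 0 /\ nzd x.
Hypothesis depth1 : exists y : R1, pi1 y = 0 /\ nzd y.

Lemma pi_unit2 (s : R2) : pi2 s != 0 -> is_unit s.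
Proof. exact: (@pi_unit k R2 pi2 surj2 loc2 s). Qed.
Lemma pi_unit1 (s : R1) : pi1 s != 0 -> is_unit s.
Proof. exact: (@pi_unit k R1 pi1 surj1 loc1 s). Qed.

Lemma mk20 (s : R2) : pi2 s = 0 -> pi2 s = pi1 0.
Proof. by move=> h; rewrite h rmorph0. Qed.

Lemma unitR2 (r : R) : pi2 (fib2 r) != 0 -> is_unit r.
Proof.
move=> h1.
have h2 : pi1 (fib1 r) != 0 by rewrite -fibP2.
have [s1 e1] := pi_unit2 h1.
have [s2 e2] := pi_unit1 h2.
have q1 : pi2 s1 = (pi2 (fib2 r))^-1.
  have := congr1 pi2 e1; rewrite rmorphM rmorph1 => e.
  by rewrite -[pi2 s1]mul1r -(mulVf h1) -mulrA e mulr1.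
have q2 : pi1 s2 = (pi1 (fib1 r))^-1.
  have := congr1 pi1 e2; rewrite rmorphM rmorph1 => e.
  by rewrite -[pi1 s2]mul1r -(mulVf h2) -mulrA e mulr1.
have hs : pi2 s1 = pi1 s2 by rewrite q1 q2 fibP2.
exists (mk2 s1 s2); apply: fibE2.
  by rewrite fib2M (mk2E hs).1 e1 fib2_one.
by rewrite fib1M (mk2E hs).2 e2 fib1_one.
Qed.

Lemma lift2 (a : R2) : exists r : R, fib2 r = a.
Proof.
have [b hb] := surj1 (pi2 a).
exists (mk2 a b); exact: (mk2E (esym hb)).1.
Qed.

Lemma nzd_fib2 (w : R) : nzd w -> nzd (fib2 w).
Proof.
move=> hw y hy.
case: (eqVneq (pi2 y) 0) => py.
  have hy0 : pi2 y = pi1 0 by rewrite py rmorph0.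
  have e : w * mk2 y 0 = 0.
    apply: fibE2; first by rewrite fib2M (mk2E hy0).1 hy fib2_zero.
    by rewrite fib1M (mk2E hy0).2 mulr0 fib1_zero.
  by have := congr1 (fun z0 : R => fib2 z0) (hw _ e); rewrite (mk2E hy0).1 fib2_zero.
exfalso.
have [z ez] := pi_unit2 py.
have w0 : fib2 w = 0.
  by rewrite -[fib2 w]mulr1 -ez mulrA hy mul0r.
have [x [px nx]] := depth2.
have hx0 : pi2 x = pi1 0 by rewrite px rmorph0.
have e : w * mk2 x 0 = 0.
  apply: fibE2; first by rewrite fib2M (mk2E hx0).1 w0 mul0r fib2_zero.
  by rewrite fib1M (mk2E hx0).2 mulr0 fib1_zero.
have := congr1 (fun z0 : R => fib2 z0) (hw _ e); rewrite (mk2E hx0).1 fib2_zero => x0.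
by have := @nzd_neq0 _ x nx; rewrite x0 eqxx.
Qed.

Section LHS.
Variable I : R -> Prop.
Hypothesis Iid : is_ideal I.
Hypothesis Icl : @closedI _ I.
Variable w : R.
Hypothesis Iw : I w.
Hypothesis nw : nzd w.
Hypothesis Iker : forall r, I r -> pi2 (fib2 r) = 0.

Definition K2 : R2 -> Prop := fun s => exists r, I r /\ fib2 r = s.

Lemma K2ker s : K2 s -> pi2 s = 0.
Proof. by move=> [r [Ir <-]]; apply: Iker. Qed.

Lemma K2id : is_ideal K2.
Proof.
case: Iid => I0 [ID IM].
split; first by exists 0; split.
split; first by move=> x y [r [Ir <-]] [s [Is <-]]; exists (r + s); split => //; apply: ID.
move=> a x [r [Ir <-]]; have [ra ea] := lift2 a.
by exists (ra * r); split; [apply: IM | rewrite fib2M ea].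
Qed.

Lemma K2nzd : exists a, K2 a /\ nzd a.
Proof. exists (fib2 w); split; [by exists w | exact: nzd_fib2]. Qed.

Lemma Ilin (a u v : R) : I u -> I v -> I (a * u + v).
Proof. by case: Iid => _ [ID IM] Iu Iv; apply: ID => //; apply: IM. Qed.

Lemma proj2I (r : R) : I r -> I (mk2 (fib2 r) 0).
Proof.
move=> Ir.
pose F := fun r : R => (mk2 (fib2 r) 0 : R).
have FE : forall r : R, I r -> fib2 (F r) = fib2 r /\ fib1 (F r) = 0.
  by move=> r' Ir'; apply: mk2E; apply: mk20; apply: Iker.
change (I (F r)).
apply: (@Icl F _ r Ir) => a u v Iu Iv.
have Iuv := Ilin a Iu Iv.
apply: fibE2.
  by rewrite (FE _ Iuv).1 !fib2D !fib2M (FE _ Iu).1 (FE _ Iv).1.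
by rewrite (FE _ Iuv).2 !fib1D !fib1M (FE _ Iu).2 (FE _ Iv).2 mulr0 addr0.
Qed.

Lemma caseA f : linOn K2 f -> (forall s, K2 s -> pi2 (f s) = 0) -> forall s, K2 s -> K2 (f s).
Proof.
move=> hf hk s [r [Ir <-]].
pose F := fun r : R => (mk2 (f (fib2 r)) 0 : R).
have FE : forall r : R, I r -> fib2 (F r) = f (fib2 r) /\ fib1 (F r) = 0.
  by move=> r' Ir'; apply: mk2E; apply: mk20; apply: hk; exists r'.
have K1I : forall r : R, I r -> K2 (fib2 r) by move=> r' Ir'; exists r'.
have IF : I (F r).
  apply: (@Icl F _ r Ir) => a u v Iu Iv.
  have Iuv := Ilin a Iu Iv.
  apply: fibE2.
    rewrite (FE _ Iuv).1 !fib2D !fib2M (FE _ Iu).1 (FE _ Iv).1 ?fib2D ?fib2M.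
    by apply: hf; apply: K1I.
  by rewrite (FE _ Iuv).2 !fib1D !fib1M (FE _ Iu).2 (FE _ Iv).2 mulr0 addr0.
by exists (F r); split => //; rewrite (FE _ Ir).1.
Qed.

Lemma caseB f : linOn K2 f -> (exists x, K2 x /\ pi2 (f x) != 0) ->
  (exists x, [/\ nzd x, pi2 x = 0 & forall m, pi2 m = 0 -> exists c, m = x * c])
  /\ eqset K2 (fun s => pi2 s = 0).
Proof.
move=> hf [x [Kx px]].
have [u' eu] := pi_unit2 px.
have Ka : K2 (fib2 w) by exists w.
have na : nzd (fib2 w) := nzd_fib2 nw.
have hM := linOnM K2id hf.
have star : forall y, K2 y -> fib2 w * f y = y * f (fib2 w).
  by move=> y Ky; rewrite -(hM _ y Ky) -(hM y _ Ka) mulrC.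
have xq : x * (u' * f (fib2 w)) = fib2 w.
  by rewrite mulrCA -(star x Kx) mulrCA [u' * _]mulrC eu mulr1.
have nq : nzd (u' * f (fib2 w)).
  by apply: (@nzdMl _ _ x); rewrite mulrC xq.
have nx : nzd x by apply: (@nzdMl _ x (u' * f (fib2 w))); rewrite xq.
have dec : forall y, K2 y -> y = x * (u' * f y).
  move=> y Ky; apply/eqP; rewrite -subr_eq0; apply/eqP; apply: nq.
  rewrite mulrBr.
  have -> : u' * f (fib2 w) * (x * (u' * f y)) = u' * (fib2 w * f y).
    by rewrite -[in RHS]xq; ring.
  by rewrite star //; ring.
have Kall : forall m, pi2 m = 0 -> K2 m.
  move=> m pm.
  have [r [Ir er]] := Kx.
  pose F := fun r : R => (mk2 (m * (u' * f (fib2 r))) 0 : R).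
  have FE : forall r : R, fib2 (F r) = m * (u' * f (fib2 r)) /\ fib1 (F r) = 0.
    by move=> r'; apply: mk2E; apply: mk20; rewrite rmorphM pm mul0r.
  have IF : I (F r).
    apply: (@Icl F _ r Ir) => a u v Iu Iv.
    apply: fibE2.
      rewrite (FE _).1 !fib2D !fib2M (FE u).1 (FE v).1 ?fib2D ?fib2M hf; first by ring.
        by exists u.
      by exists v.
    by rewrite (FE _).2 !fib1D !fib1M (FE u).2 (FE v).2 mulr0 addr0.
  exists (F r); split => //; rewrite (FE r).1 er.
  by rewrite [u' * _]mulrC eu mulr1.
split.
  exists x; split => //; first exact: K2ker.
  by move=> m pm; exists (u' * f m); apply: dec; apply: Kall.
by move=> s; split; [exact: K2ker | exact: Kall].
Qed.

Lemma K2X : X_set pi2 K2.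
Proof.
case: (classic (is_DVR R2)) => hD.
  left; split => //.
  have [hdom [hpir _]] := hD.
  have [a ha] := hpir K2 K2id.
  have [w1 [Kw1 nw1]] := K2nzd.
  have a0 : a != 0.
    apply/eqP => a0; move: (ha w1) => [/(_ Kw1) [r er] _].
    by have := @nzd_neq0 _ w1 nw1; rewrite er a0 mulr0 eqxx.
  have Ka : K2 a by apply/ha; exists 1; rewrite mul1r.
  pose f := fun y : R2 => epsilon (inhabits 0) (fun c => y = c * a).
  have fE : forall y, K2 y -> y = f y * a.
    move=> y /ha hy; exact: (epsilon_spec (inhabits 0) (fun c => y = c * a) hy).
  have canc : forall c c', c * a = c' * a -> c = c'.
    move=> c c' e; have : (c - c') * a = 0 by rewrite mulrBl e subrr.
    case/hdom => [/eqP|/eqP]; first by rewrite subr_eq0 => /eqP.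
    by rewrite (negbTE a0).
  have hf : linOn K2 f.
    move=> b u v Ku Kv; apply: canc.
    have Kuv : K2 (b * u + v) by case: K2id => _ [ID IM]; apply: ID => //; apply: IM.
    by rewrite -fE // mulrDl -mulrA -!fE.
  have fa : f a = 1 by apply: canc; rewrite -fE // mul1r.
  have pfa : pi2 (f a) != 0 by rewrite fa rmorph1 oner_eq0.
  by have [_ H] := caseB hf (ex_intro _ a (conj Ka pfa)).
right; split => //.
split.
  split; last exact: K2nzd.
  apply: closed_trace; first exact: K2id.
  move=> f hf s Ks.
  case: (classic (forall s, K2 s -> pi2 (f s) = 0)) => h.
    exact: caseA.
  exfalso; apply: hD.
  have [x hx] := not_all_ex_not _ _ h.
  have [Kx px] := imply_to_and _ _ hx.
  have [[y [ny py gen]] _] := caseB hf (ex_intro _ x (conj Kx (introN eqP px))).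
  exact: (@isDVR k R2 pi2 surj2 loc2 noeth2 y ny py gen).
move=> hw; have := K2ker ((hw 1).2 Logic.I); rewrite rmorph1 => /eqP.
by rewrite oner_eq0.
Qed.
End LHS.

Section RHS.
Variable L : R -> Prop.
Variable Q2 : R2 -> Prop.
Hypothesis L0 : L 0.
Hypothesis LQ : forall s, Q2 s -> L (mk2 s 0).
Hypothesis Qcl : forall f, linOn Q2 f -> (forall s, Q2 s -> pi2 (f s) = 0) ->
  forall s, Q2 s -> Q2 (f s).
Hypothesis Qker : forall s, Q2 s -> pi2 s = 0.
Variable F : R -> R.
Hypothesis hF : linOn L F.

Lemma side2 s : Q2 s -> fib1 (F (mk2 s 0)) = 0 /\ Q2 (fib2 (F (mk2 s 0))).
Proof.
have F0 := linOn0 L0 hF.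
have e2 : forall s, Q2 s -> fib1 (F (mk2 s 0)) = 0.
  move=> s' Qs'.
  have [z [pz nz]] := depth1.
  have hz : pi2 0 = pi1 z by rewrite pz rmorph0.
  have hs : pi2 s' = pi1 0 by rewrite Qker // rmorph0.
  have e : (mk2 0 z : R) * mk2 s' 0 = 0.
    apply: fibE2; first by rewrite fib2M (mk2E hz).1 mul0r fib2_zero.
    by rewrite fib1M (mk2E hs).2 mulr0 fib1_zero.
  have := @hF (mk2 0 z) (mk2 s' 0) 0 (LQ Qs') L0; rewrite addr0 e F0 addr0 => e'.
  have := congr1 (fun z0 : R => fib1 z0) e'; rewrite fib1_zero fib1M (mk2E hz).2 => h.
  by apply: nz; rewrite -h.
pose f := fun s => fib2 (F (mk2 s 0)).
have hf : linOn Q2 f.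
  move=> a u v Qu Qv.
  have [a' ha'] := surj1 (pi2 a).
  have ha : pi2 a = pi1 a' by rewrite ha'.
  have hu : pi2 u = pi1 0 by rewrite Qker // rmorph0.
  have hv : pi2 v = pi1 0 by rewrite Qker // rmorph0.
  have huv : pi2 (a * u + v) = pi1 0.
    by rewrite rmorphD rmorphM (Qker Qu) (Qker Qv) mulr0 addr0 rmorph0.
  have E : (mk2 (a * u + v) 0 : R) = mk2 a a' * mk2 u 0 + mk2 v 0.
    apply: fibE2.
      by rewrite (mk2E huv).1 !fib2D !fib2M (mk2E ha).1 (mk2E hu).1 (mk2E hv).1.
    by rewrite (mk2E huv).2 !fib1D !fib1M (mk2E ha).2 (mk2E hu).2 (mk2E hv).2 mulr0 addr0.
  have Lu := LQ Qu.
  have Lv := LQ Qv.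
  rewrite /f E hF //.
  transitivity (fib2 (mk2 a a' : R) * fib2 (F (mk2 u 0)) + fib2 (F (mk2 v 0))); first by [].
  by rewrite (mk2E ha).1.
move=> Qs; split; first exact: e2.
apply: (Qcl hf) => // s' Qs'.
by rewrite /f fibP2 e2 // rmorph0.
Qed.
End RHS.
End Side.
End S2.

Lemma calT_transport (A : comNzRingType) (I J : A -> Prop) :
  eqset I J -> in_calT J -> in_calT I.
Proof.
move=> hIJ [[M hM] [x [Jx nx]]]; split.
  exists M => z; split; [by move/hIJ/hM | by move/hM/hIJ].
by exists x; split => //; apply/hIJ.
Qed.

Theorem theorem5p1 (k : fieldType) (R1 R2 : comNzRingType)
    (pi1 : {rmorphism R1 -> k}) (pi2 : {rmorphism R2 -> k})
    (surj1 : forall c : k, exists x : R1, pi1 x = c)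
    (surj2 : forall c : k, exists y : R2, pi2 y = c)
    (noeth1 : noetherian R1) (noeth2 : noetherian R2)
    (loc1 : local_ring R1) (loc2 : local_ring R2)
    (depth1 : exists x : R1, pi1 x = 0 /\ nzd x)
    (depth2 : exists y : R2, pi2 y = 0 /\ nzd y) :
  forall I : fiber_product pi1 pi2 -> Prop,
    in_calT I <->
    ((exists (I1 : R1 -> Prop) (J : R2 -> Prop),
        X_set pi1 I1 /\ X_set pi2 J /\ eqset I (fiber_sum (pi1:=pi1) (pi2:=pi2) I1 J))
     \/ eqset I (@whole _)).
Proof.
move=> I; split.
- move=> [htr [w [Iw nw]]].
  have [Iid Icl] := @trace_ideal_props _ I htr.
  case: (classic (exists r, I r /\ pi1 (fib1 r) != 0)) => [[r [Ir pr]]|hn].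
    right => z; split => // _.
    have [y ey] := S1.unitR1 surj1 surj2 loc1 loc2 pr.
    case: Iid => _ [_ IM].
    by have := IM (z * y) r Ir; rewrite -mulrA [y * r]mulrC ey mulr1.
  left.
  have Iker1 : forall r, I r -> pi1 (fib1 r) = 0.
    move=> r Ir; apply: NNPP => h; apply: hn; exists r; split => //; exact/eqP.
  have Iker2 : forall r, I r -> pi2 (fib2 r) = 0.
    by move=> r Ir; rewrite fibP2 Iker1.
  exists (S1.K1 I), (S2.K2 I); split.
    exact: (S1.K1X surj1 surj2 loc1 noeth1 depth1 Iid Icl Iw nw Iker1).
  split.
    exact: (S2.K2X surj2 surj1 loc2 noeth2 depth2 Iid Icl Iw nw Iker2).
  move=> z; split.
    by move=> Iz; split; [exists z | exists z].
  move=> [[r1 [I1 e1]] [r2 [I2 e2]]].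
  have h1 := S1.proj1I Iid Icl Iker1 I1.
  have h2 := S2.proj2I Iid Icl Iker2 I2.
  have p1 : pi1 (fib1 r1) = pi2 0 by rewrite Iker1 // rmorph0.
  have p2 : pi2 (fib2 r2) = pi1 0 by rewrite Iker2 // rmorph0.
  have -> : z = mk1 (fib1 r1) 0 + mk2 (fib2 r2) 0.
    apply: fibE1.
      have -> : fib1 (mk1 (fib1 r1) 0 + mk2 (fib2 r2) 0 : fiber_product pi1 pi2)
        = fib1 (mk1 (fib1 r1) 0 : fiber_product pi1 pi2) + fib1 (mk2 (fib2 r2) 0 : fiber_product pi1 pi2) by [].
      by rewrite (mk1E p1).1 (mk2E p2).2 addr0.
    have -> : fib2 (mk1 (fib1 r1) 0 + mk2 (fib2 r2) 0 : fiber_product pi1 pi2)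
      = fib2 (mk1 (fib1 r1) 0 : fiber_product pi1 pi2) + fib2 (mk2 (fib2 r2) 0 : fiber_product pi1 pi2) by [].
    by rewrite (mk1E p1).2 (mk2E p2).1 add0r.
  by case: Iid => _ [ID _]; apply: ID.
- case => [[I1 [J [X1 [X2 hI]]]] | hw].
  + have [id1 ker1 [a [Ia na]] cl1] := Xprops surj1 loc1 depth1 X1.
    have [id2 ker2 [b [Jb nb]] cl2] := Xprops surj2 loc2 depth2 X2.
    apply: (calT_transport hI).
    set L := fiber_sum (pi1:=pi1) (pi2:=pi2) I1 J.
    have L0 : L 0 by split; [case: id1 | case: id2].
    have Lid : is_ideal L.
      split => //; split.
        move=> x y [x1 x2] [y1 y2]; split.
          by case: id1 => _ [ID _]; exact: ID.
        by case: id2 => _ [ID _]; exact: ID.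
      move=> c x [x1 x2]; split.
        by case: id1 => _ [_ IM]; exact: IM.
      by case: id2 => _ [_ IM]; exact: IM.
    have LQ1 : forall s, I1 s -> L (mk1 s 0).
      move=> s Is; have p : pi1 s = pi2 0 by rewrite ker1 // rmorph0.
      split; first by rewrite (mk1E p).1.
      by rewrite (mk1E p).2; case: id2.
    have LQ2 : forall t, J t -> L (mk2 t 0).
      move=> t Jt; have p : pi2 t = pi1 0 by rewrite ker2 // rmorph0.
      split; first by rewrite (mk2E p).2; case: id1.
      by rewrite (mk2E p).1.
    split.
      apply: closed_trace => // F hF r [Lr1 Lr2].
      have hF' : linOn L F := hF.
      have p1 : pi1 (fib1 r) = pi2 0 by rewrite ker1 // rmorph0.
      have p2 : pi2 (fib2 r) = pi1 0 by rewrite ker2 // rmorph0.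
      have Er : r = mk1 (fib1 r) 0 + mk2 (fib2 r) 0.
        apply: fibE1.
          have -> : fib1 (mk1 (fib1 r) 0 + mk2 (fib2 r) 0 : fiber_product pi1 pi2)
            = fib1 (mk1 (fib1 r) 0 : fiber_product pi1 pi2) + fib1 (mk2 (fib2 r) 0 : fiber_product pi1 pi2) by [].
          by rewrite (mk1E p1).1 (mk2E p2).2 addr0.
        have -> : fib2 (mk1 (fib1 r) 0 + mk2 (fib2 r) 0 : fiber_product pi1 pi2)
          = fib2 (mk1 (fib1 r) 0 : fiber_product pi1 pi2) + fib2 (mk2 (fib2 r) 0 : fiber_product pi1 pi2) by [].
        by rewrite (mk1E p1).2 (mk2E p2).1 add0r.
      have [s1a s1b] := S1.side1 surj2 depth2 L0 LQ1 cl1 ker1 hF' Lr1.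
      have [s2a s2b] := S2.side2 surj1 depth1 L0 LQ2 cl2 ker2 hF' Lr2.
      rewrite Er (linOnD hF' (LQ1 _ Lr1) (LQ2 _ Lr2)); split.
        have -> : fib1 (F (mk1 (fib1 r) 0) + F (mk2 (fib2 r) 0))
          = fib1 (F (mk1 (fib1 r) 0)) + fib1 (F (mk2 (fib2 r) 0)) by [].
        by rewrite s2a addr0.
      have -> : fib2 (F (mk1 (fib1 r) 0) + F (mk2 (fib2 r) 0))
        = fib2 (F (mk1 (fib1 r) 0)) + fib2 (F (mk2 (fib2 r) 0)) by [].
      by rewrite s1a add0r.
    have pa : pi1 a = pi2 b by rewrite ker1 // ker2.
    exists (mk1 a b); split.
      by split; [rewrite (mk1E pa).1 | rewrite (mk1E pa).2].
    move=> z hz; apply: fibE1.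
      apply: na; have := congr1 (fun z0 => fib1 z0) hz.
      by rewrite fib1M (mk1E pa).1 fib1_zero.
    apply: nb; have := congr1 (fun z0 => fib2 z0) hz.
    by rewrite fib2M (mk1E pa).2 fib2_zero.
  + apply: (calT_transport hw); split.
      by apply: closed_trace.
    by exists 1; split => // y; rewrite mul1r.
Qed.
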